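(* For every $a\in C\ell_{1,2}$, $\det(L(a))=\det(R(a))=(N(a)^2+4T(a)^2)^2=P(a)^2$.
   Context: $C\ell_{1,2}$ is the real Clifford algebra generated by $i_1,i_2,i_3$ with $i_1^2=1$, $i_2^2=i_3^2=-1$ and $i_ti_m=-i_mi_t$ for $t\neq m$, with real basis $e_0=1$, $e_1=i_1$, $e_2=i_2$, $e_3=i_1i_2$, $e_4=i_3$, $e_5=i_1i_3$, $e_6=i_2i_3$, $e_7=i_1i_2i_3$. For $x=\sum_{t=0}^7x_te_t$ write $\overrightarrow{x}=(x_0,\dots,x_7)^T\in\mathbb{R}^8$. For $a\in C\ell_{1,2}$, $L(a)$ and $R(a)$ are the real $8\times8$ matrices with $\overrightarrow{ax}=L(a)\overrightarrow{x}$ and $\overrightarrow{xa}=R(a)\overrightarrow{x}$ for all $x$. For $a=\sum a_te_t$: $N(a)=a_0^2-a_1^2+a_2^2-a_3^2+a_4^2-a_5^2+a_6^2-a_7^2$, $T(a)=a_0a_7+a_2a_5-a_1a_6-a_3a_4$, $P(a)=N(a)^2+4T(a)^2$. *)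

(* Defs.v *)
From HB Require Import structures.
From mathcomp Require Import all_boot all_order all_algebra.
Set Implicit Arguments. Unset Strict Implicit. Unset Printing Implicit Defensive.
Import Order.TTheory GRing.Theory Num.Theory.
Local Open Scope ring_scope.

(* Basis blades of Cl_{1,2}: the basis element e_t (t < 8) is the ordered
   product of the generators i_{j+1} for which bit j of t is set:
   e_0 = 1, e_1 = i1, e_2 = i2, e_3 = i1 i2, e_4 = i3, e_5 = i1 i3,
   e_6 = i2 i3, e_7 = i1 i2 i3 -- exactly the basis of the paper. *)

Definition clbit (j n : nat) : bool := odd (n %/ 2 ^ j).

(* index of the blade e_s e_t (symmetric difference of generator sets) *)
Definition cl_idx (s t : nat) : nat :=
  \sum_(j < 3) (clbit j s != clbit j t) * 2 ^ j.

(* number of transpositions needed to reorder e_s e_t *)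
Definition cl_swaps (s t : nat) : nat :=
  \sum_(a < 3) \sum_(b < 3) ((b < a)%N && clbit a s && clbit b t).

(* number of common generators with square -1 (i2 and i3, bits 1 and 2);
   i1 (bit 0) has square +1 *)
Definition cl_negsq (s t : nat) : nat :=
  (clbit 1 s && clbit 1 t) + (clbit 2 s && clbit 2 t).

(* e_s e_t = cl_sign s t * e_(cl_idx s t) *)
Definition cl_sign {R : ringType} (s t : nat) : R :=
  (-1) ^+ (cl_swaps s t + cl_negsq s t).

(* Elements x = sum_t x_t e_t of Cl_{1,2} over R, represented by their
   coordinate column vector (x_0, ..., x_7)^T. *)
Definition clmul {R : ringType} (a x : 'cV[R]_8) : 'cV[R]_8 :=
  \col_(k < 8) \sum_(s < 8) \sum_(t < 8)
     (if cl_idx s t == k then cl_sign s t * a s 0 * x t 0 else 0).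

Definition clbasis {R : ringType} (t : 'I_8) : 'cV[R]_8 := delta_mx t 0.

Definition Lmx {R : ringType} (a : 'cV[R]_8) : 'M[R]_8 :=
  \matrix_(k < 8, t < 8) (clmul a (clbasis t)) k 0.

Definition Rmx {R : ringType} (a : 'cV[R]_8) : 'M[R]_8 :=
  \matrix_(k < 8, t < 8) (clmul (clbasis t) a) k 0.

Definition cco {R : ringType} (a : 'cV[R]_8) (i : nat) : R := a (inord i) 0.

Definition Nf {R : ringType} (a : 'cV[R]_8) : R :=
  cco a 0 ^+ 2 - cco a 1 ^+ 2 + cco a 2 ^+ 2 - cco a 3 ^+ 2
  + cco a 4 ^+ 2 - cco a 5 ^+ 2 + cco a 6 ^+ 2 - cco a 7 ^+ 2.

Definition Tf {R : ringType} (a : 'cV[R]_8) : R :=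
  cco a 0 * cco a 7 + cco a 2 * cco a 5 - cco a 1 * cco a 6 - cco a 3 * cco a 4.

Definition Pf {R : ringType} (a : 'cV[R]_8) : R :=
  Nf a ^+ 2 + 4 * Tf a ^+ 2.

(* Main.v *)
Require Import Defs.
From HB Require Import structures.
From mathcomp Require Import all_boot all_order all_algebra.
From mathcomp Require Import ring.
Import Order.TTheory GRing.Theory Num.Theory.
Definition XT : seq (seq nat) :=
  [:: [:: 0; 1; 2; 3; 4; 5; 6; 7];
  [:: 1; 0; 3; 2; 5; 4; 7; 6];
  [:: 2; 3; 0; 1; 6; 7; 4; 5];
  [:: 3; 2; 1; 0; 7; 6; 5; 4];
  [:: 4; 5; 6; 7; 0; 1; 2; 3];
  [:: 5; 4; 7; 6; 1; 0; 3; 2];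
  [:: 6; 7; 4; 5; 2; 3; 0; 1];
  [:: 7; 6; 5; 4; 3; 2; 1; 0]].

Definition ST : seq (seq bool) :=
  [:: [:: false; false; false; false; false; false; false; false];
  [:: false; false; false; false; false; false; false; false];
  [:: false; true; true; false; false; true; true; false];
  [:: false; true; true; false; false; true; true; false];
  [:: false; true; true; false; true; false; false; true];
  [:: false; true; true; false; true; false; false; true];
  [:: false; false; false; false; true; true; true; true];
  [:: false; false; false; false; true; true; true; true]].

Definition PLL : seq (seq nat) :=
  [:: [:: 1; 0; 0; 0; 1; 0; 0; 0];
  [:: 1; 0; 0; 0; 2; 0; 0; 0];
  [:: 0; 1; 0; 0; 0; 1; 0; 0];
  [:: 0; 2; 0; 0; 0; 1; 0; 0];
  [:: 0; 0; 1; 0; 0; 0; 1; 0];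
  [:: 0; 0; 2; 0; 0; 0; 1; 0];
  [:: 0; 0; 0; 1; 0; 0; 0; 1];
  [:: 0; 0; 0; 1; 0; 0; 0; 2]].

Definition PRL : seq (seq nat) :=
  [:: [:: 1; 0; 0; 0; 1; 0; 0; 0];
  [:: 1; 0; 0; 0; 2; 0; 0; 0];
  [:: 0; 1; 0; 0; 0; 1; 0; 0];
  [:: 0; 1; 0; 0; 0; 2; 0; 0];
  [:: 0; 0; 1; 0; 0; 0; 1; 0];
  [:: 0; 0; 1; 0; 0; 0; 2; 0];
  [:: 0; 0; 0; 1; 0; 0; 0; 1];
  [:: 0; 0; 0; 1; 0; 0; 0; 2]].

Local Open Scope ring_scope.




Definition BLL {R : nzRingType} (a : 'cV[R]_8) : seq (seq R) :=
  [:: [:: cco a 0 + cco a 1; - cco a 2 - cco a 3; - cco a 4 - cco a 5; - cco a 6 - cco a 7; 0; 0; 0; 0];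
  [:: cco a 2 - cco a 3; cco a 0 - cco a 1; - cco a 6 + cco a 7; cco a 4 - cco a 5; 0; 0; 0; 0];
  [:: cco a 4 - cco a 5; cco a 6 - cco a 7; cco a 0 - cco a 1; - cco a 2 + cco a 3; 0; 0; 0; 0];
  [:: cco a 6 + cco a 7; - cco a 4 - cco a 5; cco a 2 + cco a 3; cco a 0 + cco a 1; 0; 0; 0; 0];
  [:: 0; 0; 0; 0; cco a 0 - cco a 1; - cco a 2 + cco a 3; - cco a 4 + cco a 5; - cco a 6 + cco a 7];
  [:: 0; 0; 0; 0; cco a 2 + cco a 3; cco a 0 + cco a 1; - cco a 6 - cco a 7; cco a 4 + cco a 5];
  [:: 0; 0; 0; 0; cco a 4 + cco a 5; cco a 6 + cco a 7; cco a 0 + cco a 1; - cco a 2 - cco a 3];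
  [:: 0; 0; 0; 0; cco a 6 - cco a 7; - cco a 4 + cco a 5; cco a 2 - cco a 3; cco a 0 - cco a 1]].


Definition BRL {R : nzRingType} (a : 'cV[R]_8) : seq (seq R) :=
  [:: [:: cco a 0 + cco a 1; - cco a 2 + cco a 3; - cco a 4 + cco a 5; - cco a 6 - cco a 7; 0; 0; 0; 0];
  [:: cco a 2 + cco a 3; cco a 0 - cco a 1; cco a 6 - cco a 7; - cco a 4 - cco a 5; 0; 0; 0; 0];
  [:: cco a 4 + cco a 5; - cco a 6 + cco a 7; cco a 0 - cco a 1; cco a 2 + cco a 3; 0; 0; 0; 0];
  [:: cco a 6 + cco a 7; cco a 4 - cco a 5; - cco a 2 + cco a 3; cco a 0 + cco a 1; 0; 0; 0; 0];
  [:: 0; 0; 0; 0; cco a 0 - cco a 1; - cco a 2 - cco a 3; - cco a 4 - cco a 5; - cco a 6 + cco a 7];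
  [:: 0; 0; 0; 0; cco a 2 - cco a 3; cco a 0 + cco a 1; cco a 6 + cco a 7; - cco a 4 + cco a 5];
  [:: 0; 0; 0; 0; cco a 4 - cco a 5; - cco a 6 - cco a 7; cco a 0 + cco a 1; cco a 2 - cco a 3];
  [:: 0; 0; 0; 0; cco a 6 - cco a 7; cco a 4 + cco a 5; - cco a 2 - cco a 3; cco a 0 - cco a 1]].

Definition xt (k t : nat) : nat := nth 0%N (nth [::] XT k) t.
Definition st (k t : nat) : bool := nth false (nth [::] ST k) t.

Lemma cl_idxE s t : cl_idx s t =
  ((clbit 0 s != clbit 0 t) + (clbit 1 s != clbit 1 t) * 2 + (clbit 2 s != clbit 2 t) * 4)%N.
Proof. by rewrite /cl_idx !big_ord_recr big_ord0 /= muln1. Qed.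

Lemma cl_swapsE s t : cl_swaps s t =
  ((clbit 1 s && clbit 0 t) + (clbit 2 s && clbit 0 t) + (clbit 2 s && clbit 1 t))%N.
Proof. rewrite /cl_swaps !big_ord_recr !big_ord0 /= !add0n !addn0. by rewrite addnA. Qed.

Lemma allI8 (p : nat -> bool) : all p (iota 0 8) -> forall s, (s < 8)%N -> p s.
Proof. by move=> /allP H s hs; apply: H; rewrite mem_iota. Qed.
Arguments allI8 {p}.

Lemma idx_fact : all (fun s => all (fun t =>
   ((clbit 0 s != clbit 0 t) + (clbit 1 s != clbit 1 t) * 2 + (clbit 2 s != clbit 2 t) * 4 == xt s t)%N
   && (odd ((clbit 1 s && clbit 0 t) + (clbit 2 s && clbit 0 t) + (clbit 2 s && clbit 1 t) + cl_negsq s t) == st s t)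
   && (xt s t < 8)%N
   && all (fun k => (xt s t == k) == (s == xt k t)) (iota 0 8)
   && all (fun k => (xt t s == k) == (s == xt t k)) (iota 0 8)
  ) (iota 0 8)) (iota 0 8).
Proof. by vm_compute. Qed.

Lemma cl_idx_xt s t : (s < 8)%N -> (t < 8)%N -> cl_idx s t = xt s t.
Proof.
move=> hs ht; have := allI8 (allI8 idx_fact _ hs) _ ht.
by rewrite cl_idxE => /andP[/andP[/andP[/andP[/eqP -> _] _] _] _].
Qed.

Lemma cl_sign_st (R : ringType) s t : (s < 8)%N -> (t < 8)%N ->
  cl_sign s t = (if st s t then -1 else 1 : R).
Proof.
move=> hs ht; have := allI8 (allI8 idx_fact _ hs) _ ht.
move=> /andP[/andP[/andP[/andP[_ /eqP <-] _] _] _].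
by rewrite /cl_sign -signr_odd cl_swapsE; case: odd.
Qed.

Lemma xt_lt s t : (s < 8)%N -> (t < 8)%N -> (xt s t < 8)%N.
Proof.
move=> hs ht; have := allI8 (allI8 idx_fact _ hs) _ ht.
by move=> /andP[/andP[/andP[_ ->] _] _].
Qed.

Lemma xt_eq1 s t k : (s < 8)%N -> (t < 8)%N -> (k < 8)%N -> (xt s t == k) = (s == xt k t).
Proof.
move=> hs ht hk; have := allI8 (allI8 idx_fact _ hs) _ ht.
move=> /andP[/andP[_ H] _]. have := allI8 H _ hk. by move/eqP.
Qed.

Lemma xt_eq2 s t k : (s < 8)%N -> (t < 8)%N -> (k < 8)%N -> (xt t s == k) = (s == xt t k).
Proof.
move=> hs ht hk; have := allI8 (allI8 idx_fact _ hs) _ ht.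
move=> /andP[_ H]. have := allI8 H _ hk. by move/eqP.
Qed.

Definition fm (R : ringType) n (f : nat -> nat -> R) : 'M[R]_n := \matrix_(i < n, j < n) f i j.
Arguments fm {R}.

Definition Lent (R : ringType) (a : 'cV[R]_8) (k t : nat) : R :=
  (if st (xt k t) t then -1 else 1) * cco a (xt k t).
Arguments Lent {R}.
Definition Rent (R : ringType) (a : 'cV[R]_8) (k t : nat) : R :=
  (if st t (xt t k) then -1 else 1) * cco a (xt t k).

Arguments Rent {R}.

Lemma Lmx_fm (R : ringType) (a : 'cV[R]_8) : Lmx a = fm 8 (Lent a).
Proof.
apply/matrixP => k t; rewrite !mxE.
rewrite (eq_bigr (fun s : 'I_8 => if cl_idx s t == k then cl_sign s t * a s 0 else 0)); last first.
  move=> s _; rewrite (bigD1 t) //= big1 ?addr0.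
    by rewrite !mxE !eqxx /= mulr1.
  by move=> t' /negbTE ne; rewrite !mxE ne /= mulr0; case: ifP.
have hs0 : (xt k t < 8)%N by apply: xt_lt.
rewrite (bigD1 (Ordinal hs0)) //= big1 ?addr0.
  rewrite cl_idx_xt // xt_eq1 // eqxx cl_sign_st // /Lent /cco.
  by congr (_ * a _ 0); apply: val_inj; rewrite /= inordK.
move=> s ne; rewrite cl_idx_xt // xt_eq1 //.
by have -> : (s == xt k t :> nat) = false by apply/negbTE; move: ne; apply: contra => /eqP e; apply/eqP/val_inj.
Qed.

Lemma Rmx_fm (R : ringType) (a : 'cV[R]_8) : Rmx a = fm 8 (Rent a).
Proof.
apply/matrixP => k t; rewrite !mxE.
rewrite (bigD1 t) //= [X in _ + X = _]big1 ?addr0; last first.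
  move=> s /negbTE ne; apply: big1 => t' _; rewrite !mxE ne /= mulr0 mul0r; by case: ifP.
have hs0 : (xt t k < 8)%N by apply: xt_lt.
rewrite (bigD1 (Ordinal hs0)) //= big1 ?addr0.
  rewrite !mxE !eqxx /= mulr1 cl_idx_xt // xt_eq2 // eqxx cl_sign_st // /Rent /cco.
  by congr (_ * a _ 0); apply: val_inj; rewrite /= inordK.
move=> s ne; rewrite !mxE !eqxx /= mulr1 cl_idx_xt // xt_eq2 //.
by have -> : (s == xt t k :> nat) = false by apply/negbTE; move: ne; apply: contra => /eqP e; apply/eqP/val_inj.
Qed.

Lemma det_fmS (R : comRingType) n (f : nat -> nat -> R) :
  \det (fm n.+1 f) = \sum_(j < n.+1) f 0%N j * ((-1) ^+ j *
     \det (fm n (fun i k => f i.+1 (if (k < j)%N then k else k.+1)))).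
Proof.
rewrite (expand_det_row _ ord0); apply: eq_bigr => j _.
rewrite /cofactor !mxE add0n; congr (_ * (_ * \det _)).
apply/matrixP => i k; rewrite !mxE /= /bump /= add1n.
by case: ltnP => h; rewrite ?add0n ?add1n.
Qed.

Definition sgn (R : ringType) (c : nat) : R :=
  if c == 1%N then 1 else if c == 2%N then -1 else 0.
Arguments sgn {R}.

Definition Pm (R : ringType) (PL : seq (seq nat)) : 'M[R]_8 :=
  fm 8 (fun i j => sgn (nth 0%N (nth [::] PL i) j)).
Arguments Pm {R}.

Definition Bm (R : ringType) (BL : seq (seq R)) : 'M[R]_8 :=
  fm 8 (fun i j => nth 0 (nth [::] BL i) j).
Arguments Bm {R}.

Ltac ord8 i := let H := fresh "H" in
  case: i => [[|[|[|[|[|[|[|[|?]]]]]]]] H] //=;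
  try (exfalso; by rewrite !ltnS ltn0 in H).

Lemma LP (R : comRingType) (a : 'cV[R]_8) : Lmx a *m Pm PLL = Pm PLL *m Bm (BLL a).
Proof.
rewrite Lmx_fm; apply/matrixP => i j; rewrite !mxE !big_ord_recr !big_ord0 /= !mxE.
rewrite /Lent /sgn /xt /st.
ord8 i; ord8 j; ring.
Qed.

Lemma RP (R : comRingType) (a : 'cV[R]_8) : Rmx a *m Pm PRL = Pm PRL *m Bm (BRL a).
Proof.
rewrite Rmx_fm; apply/matrixP => i j; rewrite !mxE !big_ord_recr !big_ord0 /= !mxE.
rewrite /Rent /sgn /xt /st.
ord8 i; ord8 j; ring.
Qed.

Lemma PTP (R : comRingType) PL : PL = PLL \/ PL = PRL ->
  (Pm PL)^T *m (Pm PL) = (2 : R)%:M.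
Proof.
move=> hPL; apply/matrixP => i j; rewrite !mxE !big_ord_recr !big_ord0 /= !mxE.
rewrite /sgn.
by case: hPL => ->; ord8 i; ord8 j; ring.
Qed.

Lemma detP_neq0 (R : realFieldType) PL : PL = PLL \/ PL = PRL -> \det (Pm PL : 'M[R]_8) != 0.
Proof.
move=> hPL; apply/negP => /eqP h.
have := congr1 determinant (PTP R _ hPL).
rewrite det_mulmx det_tr h mul0r det_scalar => /eqP.
by rewrite eq_sym expf_eq0 /= pnatr_eq0.
Qed.

Lemma det_blocks (R : comRingType) (BL : seq (seq R)) :
  (forall i j : nat, (i < 4)%N -> (j < 4)%N ->
     nth 0 (nth [::] BL i) j.+4 = 0 /\ nth 0 (nth [::] BL i.+4) j = 0) ->
  \det (Bm BL) = \det (fm 4 (fun i j => nth 0 (nth [::] BL i) j)) *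
                 \det (fm 4 (fun i j => nth 0 (nth [::] BL i.+4) j.+4)).
Proof.
move=> hz.
have E : (Bm BL : 'M[R]_(4 + 4)) = block_mx (fm 4 (fun i j => nth 0 (nth [::] BL i) j)) 0 0
                 (fm 4 (fun i j => nth 0 (nth [::] BL i.+4) j.+4)).
  apply/matrixP => i j; rewrite -[i]splitK -[j]splitK.
  case: (split i) => i'; case: (split j) => j';
  rewrite ?block_mxEul ?block_mxEur ?block_mxEdl ?block_mxEdr !mxE /=.
  - by [].
  - by rewrite add4n; case: (hz i' j').
  - by rewrite add4n; case: (hz i' j').
  - by rewrite !add4n.
by rewrite -(det_ublock _ 0) -E.
Qed.

Lemma detLB (R : realFieldType) (a : 'cV[R]_8) : \det (Lmx a) = \det (Bm (BLL a)).
Proof.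
have h := congr1 determinant (LP _ a); rewrite !det_mulmx [RHS]mulrC in h.
exact: (mulIf (detP_neq0 R PLL (or_introl erefl)) h).
Qed.

Lemma detRB (R : realFieldType) (a : 'cV[R]_8) : \det (Rmx a) = \det (Bm (BRL a)).
Proof.
have h := congr1 determinant (RP _ a); rewrite !det_mulmx [RHS]mulrC in h.
exact: (mulIf (detP_neq0 R PRL (or_intror erefl)) h).
Qed.

Ltac expand_det :=
  rewrite !det_fmS !big_ord_recr !big_ord0 /=;
  rewrite !det_fmS !big_ord_recr !big_ord0 /=;
  rewrite !det_fmS !big_ord_recr !big_ord0 /=;
  rewrite !det_fmS !big_ord_recr !big_ord0 /= !det_mx00.

Lemma detBL (R : comRingType) (a : 'cV[R]_8) :
  \det (Bm (BLL a)) = (Nf a ^+ 2 + 4 * Tf a ^+ 2) ^+ 2.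
Proof.
rewrite det_blocks; last first.
  by move=> [|[|[|[|i]]]] [|[|[|[|j]]]].
rewrite [RHS]expr2; congr (_ * _); rewrite /Nf /Tf; expand_det; ring.
Qed.

Lemma detBR (R : comRingType) (a : 'cV[R]_8) :
  \det (Bm (BRL a)) = (Nf a ^+ 2 + 4 * Tf a ^+ 2) ^+ 2.
Proof.
rewrite det_blocks; last first.
  by move=> [|[|[|[|i]]]] [|[|[|[|j]]]].
rewrite [RHS]expr2; congr (_ * _); rewrite /Nf /Tf; expand_det; ring.
Qed.

Theorem proposition2p4 (R : realFieldType) (a : 'cV[R]_8) :
  \det (Lmx a) = (Nf a ^+ 2 + 4 * Tf a ^+ 2) ^+ 2 /\
  \det (Rmx a) = (Nf a ^+ 2 + 4 * Tf a ^+ 2) ^+ 2 /\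
  (Nf a ^+ 2 + 4 * Tf a ^+ 2) ^+ 2 = Pf a ^+ 2.
Proof.
split; first by rewrite detLB detBL.
split; first by rewrite detRB detBR.
by [].
Qed.
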